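(* If the differentiable function $F:\Omega\subset\mathbb{C}^{2p}\to\mathbb S$ is q-monogenic, then so are the functions $PF$ and $QF$.
   Context: Identify $\mathbb{C}^{2p}\simeq\mathbb{R}^{4p}$ with coordinates $(x_1,y_1,\dots,x_{2p},y_{2p})$, $z_k=x_k+iy_k$, $\partial_{z_k}=\tfrac12(\partial_{x_k}-i\partial_{y_k})$, $\partial_{\bar z_k}=\tfrac12(\partial_{x_k}+i\partial_{y_k})$; $\Omega$ open. $\mathbb{C}_{4p}$ is the complex Clifford algebra generated by $e_1,\dots,e_{4p}$ with $e_\alpha e_\beta+e_\beta e_\alpha=-2\delta_{\alpha\beta}$. Witt basis: $\mathfrak f_k=\tfrac12(-e_{2k-1}+ie_{2k})$, $\mathfrak f_k^\dagger=\tfrac12(e_{2k-1}+ie_{2k})$. $I=\prod_k\mathfrak f_k\mathfrak f_k^\dagger$, $\mathbb S=\mathbb C_{4p}I$. $P=\sum_{j=1}^p\mathfrak f_{2j}\mathfrak f_{2j-1}$, $Q=\sum_{j=1}^p\mathfrak f^\dagger_{2j-1}\mathfrak f^\dagger_{2j}$, acting by left multiplication. A function $G$ with values in $\mathbb S$ is q-monogenic if it is annihilated by $\partial_{\underline z}=\sum_{k}\mathfrak f_k^\dagger\partial_{z_k}$, $\partial_{\underline z}^\dagger=\sum_{k}\mathfrak f_k\partial_{\bar z_k}$, $\partial_{\underline z}^J=\sum_{j=1}^p(\mathfrak f_{2j-1}\partial_{z_{2j}}-\mathfrak f_{2j}\partial_{z_{2j-1}})$ and $\partial_{\underline z}^{\dagger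 J}=\sum_{j=1}^p(\mathfrak f^\dagger_{2j-1}\partial_{\bar z_{2j}}-\mathfrak f^\dagger_{2j}\partial_{\bar z_{2j-1}})$ (equivalently, by $\underline\partial=\sum_\alpha e_\alpha\partial_{X_\alpha}$ and its rotations by the complex structures $\mathbb I,\mathbb J,\mathbb K=\mathbb I\mathbb J$, where $\mathbb{I}(e_{2k-1})=e_{2k}$, $\mathbb{I}(e_{2k})=-e_{2k-1}$, $\mathbb{J}(e_{4j-3})=e_{4j-1}$, $\mathbb{J}(e_{4j-2})=-e_{4j}$, $\mathbb{J}(e_{4j-1})=-e_{4j-3}$, $\mathbb{J}(e_{4j})=e_{4j-2}$). *)

(* Defs.v *)
From HB Require Import structures.
From mathcomp Require Import all_boot all_order all_algebra.
From mathcomp Require Import all_classical all_reals all_analysis.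
From mathcomp Require Import complex.
Set Implicit Arguments. Unset Strict Implicit. Unset Printing Implicit Defensive.
Import Order.TTheory GRing.Theory Num.Theory.
Import numFieldNormedType.Exports.
Local Open Scope ring_scope.
Local Open Scope classical_set_scope.

(** An element is the family of its (complex) coordinates on the basis
    e_A, A ⊆ {0,..,m-1}, where e_A = e_{a1} ... e_{ak} for a1 < ... < ak.
    Indices are 0-based: the paper's e_alpha (alpha = 1..m) is our [cl_e (alpha-1)]. *)
Section Clifford.
Variables (R : realType) (m : nat).

Definition Cl := {ffun {set 'I_m} -> complex R}.

(* e_A e_B = (-1)^(#{(a,b) in A x B | b < a} + |A ∩ B|) e_{A Δ B},
   which encodes e_a e_b + e_b e_a = -2 delta_ab. *)
Definition cl_sign (A B : {set 'I_m}) : complex R :=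
  (-1) ^+ (#|finset (fun ab : 'I_m * 'I_m =>
               [&& ab.1 \in A, ab.2 \in B & (val ab.2 < val ab.1)%N])|
           + #|A :&: B|).

Definition cl_mul (x y : Cl) : Cl :=
  [ffun C : {set 'I_m} => \sum_(A : {set 'I_m}) \sum_(B : {set 'I_m})
       if (A :\: B) :|: (B :\: A) == C then cl_sign A B * x A * y B else 0].

Definition cl_one : Cl := [ffun A : {set 'I_m} => if #|A| == 0%N then 1 else 0].

Definition cl_e (a : nat) : Cl :=
  [ffun A : {set 'I_m} => if A == finset (fun i : 'I_m => val i == a) then 1 else 0].

Definition cl_add (x y : Cl) : Cl := [ffun A : {set 'I_m} => x A + y A].
Definition cl_opp (x : Cl) : Cl := [ffun A : {set 'I_m} => - x A].
Definition cl_scale (c : complex R) (x : Cl) : Cl := [ffun A : {set 'I_m} => c * x A].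
Definition cl_zero : Cl := [ffun A : {set 'I_m} => 0].

Definition imag_unit : complex R := Complex 0 1.
Definition half : complex R := (2%:R)^-1.

(* Witt basis, 0-based: the paper's f_k (k = 1..2p) is our [witt (k-1)].
   f_k = 1/2 (-e_{2k-1} + i e_{2k}),  f_k^dagger = 1/2 (e_{2k-1} + i e_{2k}). *)
Definition witt (k : nat) : Cl :=
  cl_scale half (cl_add (cl_opp (cl_e (2 * k))) (cl_scale imag_unit (cl_e (2 * k).+1))).
Definition wittd (k : nat) : Cl :=
  cl_scale half (cl_add (cl_e (2 * k)) (cl_scale imag_unit (cl_e (2 * k).+1))).

Definition cl_sum (I : finType) (f : I -> Cl) : Cl := [ffun A : {set 'I_m} => \sum_(i : I) f i A].

(** * Differential operators on functions 'rV[R]_m -> Cl.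
    Real coordinates X_0, ..., X_{m-1} with z_k = X_{2k} + i X_{2k+1}
    (0-based; i.e. the paper's (x_1,y_1,...,x_{2p},y_{2p})). *)
Definition coord_dir (a : nat) : 'rV[R]_m := \row_(i < m) (if val i == a then 1 else 0).

Definition pderiv (F : 'rV[R]_m -> Cl) (a : nat) (x : 'rV[R]_m) : Cl :=
  [ffun A : {set 'I_m} => Complex ('D_(coord_dir a) (fun y => complex.Re (F y A)) x)
                     ('D_(coord_dir a) (fun y => complex.Im (F y A)) x)].

Definition dz (k : nat) (F : 'rV[R]_m -> Cl) (x : 'rV[R]_m) : Cl :=
  cl_scale half (cl_add (pderiv F (2 * k) x)
                        (cl_opp (cl_scale imag_unit (pderiv F (2 * k).+1 x)))).
Definition dzb (k : nat) (F : 'rV[R]_m -> Cl) (x : 'rV[R]_m) : Cl :=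
  cl_scale half (cl_add (pderiv F (2 * k) x)
                        (cl_scale imag_unit (pderiv F (2 * k).+1 x))).

Definition cl_differentiable (Omega : set 'rV[R]_m) (F : 'rV[R]_m -> Cl) : Prop :=
  forall x, Omega x -> forall A : {set 'I_m},
    differentiable (fun y => complex.Re (F y A)) x /\ differentiable (fun y => complex.Im (F y A)) x.

End Clifford.

Section Quaternionic.
Variables (R : realType) (p : nat).
Local Notation m := (4 * p)%N.
Local Notation Cl := (Cl R m).

Definition clI : Cl :=
  \big[@cl_mul R m / cl_one R m]_(k < 2 * p) cl_mul (witt R m k) (wittd R m k).
Definition in_spinor (x : Cl) : Prop := exists a : Cl, x = cl_mul a clI.

Definition clP : Cl :=
  cl_sum (fun j : 'I_p => cl_mul (witt R m (2 * j).+1) (witt R m (2 * j))).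
Definition clQ : Cl :=
  cl_sum (fun j : 'I_p => cl_mul (wittd R m (2 * j)) (wittd R m (2 * j).+1)).

Definition Dz (F : 'rV[R]_m -> Cl) (x : 'rV[R]_m) : Cl :=
  cl_sum (fun k : 'I_(2 * p) => cl_mul (wittd R m k) (dz k F x)).
Definition Dzdag (F : 'rV[R]_m -> Cl) (x : 'rV[R]_m) : Cl :=
  cl_sum (fun k : 'I_(2 * p) => cl_mul (witt R m k) (dzb k F x)).
Definition DzJ (F : 'rV[R]_m -> Cl) (x : 'rV[R]_m) : Cl :=
  cl_sum (fun j : 'I_p =>
    cl_add (cl_mul (witt R m (2 * j)) (dz (2 * j).+1 F x))
           (cl_opp (cl_mul (witt R m (2 * j).+1) (dz (2 * j) F x)))).
Definition DzdagJ (F : 'rV[R]_m -> Cl) (x : 'rV[R]_m) : Cl :=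
  cl_sum (fun j : 'I_p =>
    cl_add (cl_mul (wittd R m (2 * j)) (dzb (2 * j).+1 F x))
           (cl_opp (cl_mul (wittd R m (2 * j).+1) (dzb (2 * j) F x)))).

Definition q_monogenic (Omega : set 'rV[R]_m) (F : 'rV[R]_m -> Cl) : Prop :=
  [/\ forall x, Omega x -> in_spinor (F x),
      cl_differentiable Omega F &
      forall x, Omega x ->
        [/\ Dz F x = cl_zero R m, Dzdag F x = cl_zero R m,
            DzJ F x = cl_zero R m & DzdagJ F x = cl_zero R m]].

End Quaternionic.

(* Main.v *)
Require Import Defs.
From HB Require Import structures.
From mathcomp Require Import all_boot all_order all_algebra.
From mathcomp Require Import all_classical all_reals all_analysis.
From mathcomp Require Import complex.
From mathcomp Require Import ring lra zify.
Import numFieldNormedType.Exports.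
Set Implicit Arguments. Unset Strict Implicit. Unset Printing Implicit Defensive.
Import Order.TTheory GRing.Theory Num.Theory.
Local Open Scope ring_scope.

Section SD.
Variable T : finType.
Definition sd (A B : {set T}) := (A :\: B) :|: (B :\: A).
Lemma in_sd (A B : {set T}) x : (x \in sd A B) = (x \in A) (+) (x \in B).
Proof. by rewrite !inE; case: (x \in A); case: (x \in B). Qed.
Lemma sdC A B : sd A B = sd B A.
Proof. by apply/setP=> x; rewrite !in_sd addbC. Qed.
Lemma sdA A B C : sd A (sd B C) = sd (sd A B) C.
Proof. by apply/setP=> x; rewrite !in_sd addbA. Qed.
Lemma sdK A B : sd A (sd A B) = B.
Proof. by apply/setP=> x; rewrite !in_sd addbA addbb. Qed.
Lemma sd0 A : sd finset.set0 A = A.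
Proof. by apply/setP=> x; rewrite !in_sd inE. Qed.
Lemma sdv A : sd A A = finset.set0.
Proof. by apply/setP=> x; rewrite !in_sd addbb inE. Qed.
Lemma sd_inj A : injective (sd A).
Proof. by move=> B C h; rewrite -(sdK A B) h sdK. Qed.
Lemma sd_eq A B C : (sd A B == C) = (B == sd A C).
Proof. by apply/eqP/eqP=> [<-|->]; rewrite sdK. Qed.
Lemma odd_card_sd (X Y : {set T}) : odd #|sd X Y| = odd #|X| (+) odd #|Y|.
Proof.
rewrite /sd cardsU.
have -> : (X :\: Y) :&: (Y :\: X) = finset.set0.
  by apply/setP=> x; rewrite !inE; case: (x \in X); case: (x \in Y); rewrite ?andbF.
rewrite cards0 subn0 -(cardsID Y X) -(cardsID X Y) finset.setIC !oddD.
by case: (odd _); case: (odd _); case: (odd _).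
Qed.
End SD.

Section Sign.
Variables (R : realType) (m : nat).
Local Notation S := {set 'I_m}.
Definition invs (A B : S) := finset (fun ab : 'I_m * 'I_m =>
               [&& ab.1 \in A, ab.2 \in B & (val ab.2 < val ab.1)%N]).
Definition sexp (A B : S) := (#|invs A B| + #|A :&: B|)%N.
Lemma signE (A B : S) : @cl_sign R m A B = (-1) ^+ (odd (sexp A B)).
Proof. by rewrite signr_odd. Qed.
Lemma invs_sdl A B Z : invs (sd A B) Z = sd (invs A Z) (invs B Z).
Proof.
apply/setP=> x; rewrite /invs /sd !inE.
by case: (x.1 \in A); case: (x.1 \in B); case: (_ \in Z); case: (_ < _)%N.
Qed.
Lemma invs_sdr A B Z : invs Z (sd A B) = sd (invs Z A) (invs Z B).
Proof.
apply/setP=> x; rewrite /invs /sd !inE.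
by case: (x.2 \in A); case: (x.2 \in B); case: (_ \in Z); case: (_ < _)%N.
Qed.
Lemma I_sdl (A B Z : S) : sd A B :&: Z = sd (A :&: Z) (B :&: Z).
Proof.
apply/setP=> x; rewrite /sd !inE.
by case: (x \in A); case: (x \in B); case: (_ \in Z).
Qed.
Lemma I_sdr (A B Z : S) : Z :&: sd A B = sd (Z :&: A) (Z :&: B).
Proof.
apply/setP=> x; rewrite /sd !inE.
by case: (x \in A); case: (x \in B); case: (_ \in Z).
Qed.
Lemma sexp_sdl A B Z : odd (sexp (sd A B) Z) = odd (sexp A Z) (+) odd (sexp B Z).
Proof.
rewrite /sexp !oddD invs_sdl I_sdl !odd_card_sd.
by do 4 case: (odd _).
Qed.
Lemma sexp_sdr A B Z : odd (sexp Z (sd A B)) = odd (sexp Z A) (+) odd (sexp Z B).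
Proof.
rewrite /sexp !oddD invs_sdr I_sdr !odd_card_sd.
by do 4 case: (odd _).
Qed.
Lemma cocycle A B Z :
  @cl_sign R m A B * @cl_sign R m (sd A B) Z = @cl_sign R m A (sd B Z) * @cl_sign R m B Z.
Proof.
rewrite !signE -!signr_addb sexp_sdl sexp_sdr.
by do 4 case: (odd _).
Qed.
Lemma sexp0l Z : sexp finset.set0 Z = 0%N.
Proof.
rewrite /sexp finset.set0I cards0 addn0; apply/eqP; rewrite cards_eq0; apply/eqP.
by apply/setP=> x; rewrite !inE.
Qed.
Lemma sexp0r Z : sexp Z finset.set0 = 0%N.
Proof.
rewrite /sexp finset.setI0 cards0 addn0; apply/eqP; rewrite cards_eq0; apply/eqP.
by apply/setP=> x; rewrite !inE andbF.
Qed.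
End Sign.

Section Ring.
Variables (R : realType) (m : nat).
Local Notation S := {set 'I_m}.
Local Notation sg := (@cl_sign R m).

Lemma mulE (x y : Cl R m) C :
  cl_mul x y C = \sum_(A : S) sg A (sd A C) * x A * y (sd A C).
Proof.
rewrite ffunE; apply: eq_bigr => A _.
rewrite (bigD1 (sd A C)) //= -/(sd A (sd A C)) sdK eqxx big1 ?addr0 // => B hB.
by rewrite -/(sd A B) sd_eq (negbTE hB).
Qed.

Definition clA := Cl R m.
HB.instance Definition _ := GRing.Zmodule.on clA.

Lemma addE (x y : clA) A : (x + y) A = x A + y A.
Proof. by rewrite ffunE. Qed.

Lemma clmulA : associative (@cl_mul R m : clA -> clA -> clA).
Proof.
move=> x y z; apply/ffunP=> C.
rewrite !mulE.
under [RHS]eq_bigr => D _ do rewrite mulE mulr_sumr mulr_suml.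
rewrite [RHS]exchange_big /=; apply: eq_bigr => X _.
rewrite mulE mulr_sumr.
rewrite [RHS](reindex_inj (@sd_inj _ X)) /=.
apply: eq_bigr => Y _.
rewrite sdK.
have e1 : sd (sd X Y) C = sd Y (sd X C) by rewrite sdA (sdC X Y) -sdA.
rewrite e1.
have c := cocycle R X Y (sd Y (sd X C)).
have e2 : sd Y (sd Y (sd X C)) = sd X C by rewrite sdK.
rewrite e2 in c.
set W := sd Y (sd X C).
transitivity ((sg X (sd X C) * sg Y W) * x X * y Y * z W); first by ring.
by rewrite -c; ring.
Qed.

Lemma oneE A : cl_one R m A = if A == finset.set0 then 1 else 0.
Proof. by rewrite ffunE cards_eq0. Qed.

Lemma sg0l C : sg finset.set0 C = 1.
Proof. by rewrite signE sexp0l. Qed.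
Lemma sg0r C : sg C finset.set0 = 1.
Proof. by rewrite signE sexp0r. Qed.

Lemma clmul1r : left_id (cl_one R m : clA) (@cl_mul R m).
Proof.
move=> y; apply/ffunP=> C; rewrite mulE (bigD1 finset.set0) //= big1 ?addr0.
  by rewrite oneE eqxx sg0l sd0 !mul1r.
by move=> A hA; rewrite oneE (negbTE hA) mulr0 mul0r.
Qed.

Lemma clmulr1 : right_id (cl_one R m : clA) (@cl_mul R m).
Proof.
move=> y; apply/ffunP=> C; rewrite mulE (bigD1 C) //= big1 ?addr0.
  by rewrite oneE sdv eqxx sg0r mul1r mulr1.
move=> A hA; rewrite oneE.
have -> : (sd A C == finset.set0) = false.
  by rewrite sd_eq sdC sd0 eq_sym (negbTE hA).
by rewrite mulr0.
Qed.

Lemma clmulDl : left_distributive (@cl_mul R m : clA -> clA -> clA) +%R.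
Proof.
move=> x y z; apply/ffunP=> C; rewrite addE !mulE -big_split /=.
by apply: eq_bigr => A _; rewrite addE; ring.
Qed.

Lemma clmulDr : right_distributive (@cl_mul R m : clA -> clA -> clA) +%R.
Proof.
move=> x y z; apply/ffunP=> C; rewrite addE !mulE -big_split /=.
by apply: eq_bigr => A _; rewrite addE; ring.
Qed.

Lemma clone_neq0 : (cl_one R m : clA) != 0.
Proof.
apply/eqP => /ffunP /(_ finset.set0); rewrite oneE eqxx ffunE => /eqP.
by rewrite oner_eq0.
Qed.

HB.instance Definition _ := GRing.Zmodule_isNzRing.Build clA
  clmulA clmul1r clmulr1 clmulDl clmulDr clone_neq0.

Lemma clmulE (x y : clA) : cl_mul x y = x * y. Proof. by []. Qed.
Lemma cloneE : cl_one R m = (1 : clA). Proof. by []. Qed.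

Definition clscale (c : complex R) (x : clA) : clA := cl_scale c x.
Lemma scaleE c (x : clA) A : clscale c x A = c * x A.
Proof. by rewrite ffunE. Qed.

Fact sc_A a b (v : clA) : clscale a (clscale b v) = clscale (a * b) v.
Proof. by apply/ffunP=> A; rewrite !scaleE mulrA. Qed.
Fact sc_1 : left_id 1 clscale.
Proof. by move=> v; apply/ffunP=> A; rewrite !scaleE mul1r. Qed.
Fact sc_Dr : right_distributive clscale +%R.
Proof. by move=> a u v; apply/ffunP=> A; rewrite !(scaleE, addE) mulrDr. Qed.
Fact sc_Dl v : {morph clscale^~ v: a b / a + b}.
Proof. by move=> a b; apply/ffunP=> A; rewrite !(scaleE, addE) mulrDl. Qed.

HB.instance Definition _ := GRing.Zmodule_isLmodule.Build (complex R) clA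
  sc_A sc_1 sc_Dr sc_Dl.

Lemma scAl (a : complex R) (u v : clA) : a *: (u * v) = (a *: u) * v.
Proof.
apply/ffunP=> C; rewrite scaleE !mulE mulr_sumr; apply: eq_bigr => A _.
by rewrite scaleE; ring.
Qed.
HB.instance Definition _ := GRing.Lmodule_isLalgebra.Build (complex R) clA scAl.
Lemma scAr (a : complex R) (u v : clA) : a *: (u * v) = u * (a *: v).
Proof.
apply/ffunP=> C; rewrite scaleE !mulE mulr_sumr; apply: eq_bigr => A _.
by rewrite scaleE; ring.
Qed.
HB.instance Definition _ := GRing.Lalgebra_isAlgebra.Build (complex R) clA scAr.

Lemma clscaleE c (x : clA) : cl_scale c x = c *: x. Proof. by []. Qed.
Lemma claddE (x y : clA) : cl_add x y = x + y. Proof. by []. Qed.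
Lemma cloppE (x : clA) : cl_opp x = - x. Proof. by []. Qed.
Lemma clzeroE : cl_zero R m = (0 : clA). Proof. by []. Qed.
Lemma clsumE (I : finType) (f : I -> clA) : cl_sum f = \sum_i f i.
Proof. by apply/ffunP=> A; rewrite ffunE sum_ffunE. Qed.

End Ring.

Section Gen.
Variables (R : realType) (m : nat).
Local Notation S := {set 'I_m}.
Local Notation sg := (@cl_sign R m).
Local Notation clA := (clA R m).

Definition bas (X : S) : clA := [ffun A => if A == X then 1 else 0].

Lemma bas_mul X Y : bas X * bas Y = sg X Y *: bas (sd X Y).
Proof.
apply/ffunP=> C; rewrite -clmulE mulE (bigD1 X) //= big1 ?addr0.
  rewrite scaleE !ffunE eqxx mulr1 sd_eq eq_sym.
  by case: eqP => [<-|]; rewrite ?sdK ?mulr0.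
by move=> A hA; rewrite /bas ffunE (negbTE hA) mulr0 mul0r.
Qed.

Lemma bas0 : bas finset.set0 = 1.
Proof. by apply/ffunP=> A; rewrite ffunE -cloneE oneE. Qed.

Lemma ge_bas a (Ha : (a < m)%N) : (cl_e R m a : clA) = bas [set Ordinal Ha].
Proof.
apply/ffunP=> A; rewrite !ffunE.
have -> : finset (fun i : 'I_m => val i == a) = [set Ordinal Ha].
  by apply/setP=> i; rewrite !inE -val_eqE.
by [].
Qed.

Lemma invs11 (i j : 'I_m) :
  invs [set i] [set j] = if (val j < val i)%N then [set (i, j)] else finset.set0.
Proof.
apply/setP=> [[x1 x2]]; rewrite /invs !inE /=.
case: (eqVneq x1 i) => [->|h1] /=; last by case: ifP; rewrite ?inE //= xpair_eqE (negbTE h1).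
case: (eqVneq x2 j) => [->|h2] /=; last by case: ifP; rewrite ?inE //= xpair_eqE (negbTE h2) andbF.
by case: ifP; rewrite ?inE //= !eqxx.
Qed.

Lemma I11 (i j : 'I_m) : [set i] :&: [set j] = if i == j then [set i] else finset.set0.
Proof.
apply/setP=> x; rewrite !inE.
case: (eqVneq i j) => [->|h]; rewrite ?andbb ?inE //.
by case: (eqVneq x i) => [->|] //=; rewrite (negbTE h).
Qed.

Lemma sexp11 (i j : 'I_m) : sexp [set i] [set j] = ((val j < val i) + (i == j))%N.
Proof.
rewrite /sexp invs11 I11; case: ifP => _; rewrite ?cards1 ?cards0;
by case: ifP => _; rewrite ?cards1 ?cards0.
Qed.

Definition anti (u v : clA) := u * v + v * u.

Lemma anti_ord (i j : 'I_m) :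
  anti (bas [set i]) (bas [set j]) = (if i == j then -2 else 0) *: 1.
Proof.
rewrite /anti !bas_mul (sdC [set j]) -scalerDl !signE !sexp11.
case: (eqVneq i j) => [->|h].
  by rewrite ltnn /= sdv bas0; congr (_ *: _); rewrite expr1; ring.
rewrite !addn0 scale0r.
case: (ltngtP (val i) (val j)) => [lt|lt|/val_inj e]; last by rewrite e eqxx in h.
  by rewrite /= expr0 expr1 addrN scale0r.
by rewrite /= expr0 expr1 addNr scale0r.
Qed.

Lemma anti_ge a b : (a < m)%N -> (b < m)%N ->
  anti (cl_e R m a) (cl_e R m b) = (if a == b then -2 else 0) *: 1.
Proof.
move=> Ha Hb; rewrite (ge_bas Ha) (ge_bas Hb) anti_ord.
by rewrite -val_eqE.
Qed.

Lemma antiDl u v w : anti (u + v) w = anti u w + anti v w.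
Proof. by rewrite /anti mulrDl mulrDr addrACA. Qed.
Lemma antiDr u v w : anti w (u + v) = anti w u + anti w v.
Proof. by rewrite /anti mulrDl mulrDr addrACA. Qed.
Lemma antiZl (c : complex R) u w : anti (c *: u) w = c *: anti u w.
Proof. by rewrite /anti -scalerAl -scalerAr scalerDr. Qed.
Lemma antiZr (c : complex R) u w : anti w (c *: u) = c *: anti w u.
Proof. by rewrite /anti -scalerAl -scalerAr scalerDr. Qed.
Lemma antiNl u w : anti (- u) w = - anti u w.
Proof. by rewrite /anti mulNr mulrN opprD. Qed.
Lemma antiNr u w : anti w (- u) = - anti w u.
Proof. by rewrite /anti mulNr mulrN opprD. Qed.

End Gen.

Lemma ii (R : realType) : imag_unit R * imag_unit R = -1.
Proof. rewrite -expr2. exact: sqr_i. Qed.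
Lemma hh (R : realType) : Defs.half R * 2 = 1.
Proof. rewrite /Defs.half mulVf // pnatr_eq0 //. Qed.
Lemma scA0 (R : realType) m (c : complex R) : c = 0 -> c%:A = 0 :> clA R m.
Proof. by move->; rewrite scale0r. Qed.

Section AbelId.
Variable V : zmodType. Variables a b c d : V.
Lemma E1 : a - b + (c + d) = a + c + (d - b).
Proof. by rewrite addrACA [d - b]addrC. Qed.
Lemma E2 : a - b - (c + d) = a - c - (d + b).
Proof. by rewrite !opprD addrACA [- d - b]addrC. Qed.
Lemma E3 : a + b + (c - d) = a + c - (d + - b).
Proof. by rewrite opprD opprK addrACA [- d + b]addrC. Qed.
Lemma E4 : a + b + - (c - d) = a + - c + (d + b).
Proof. by rewrite opprD opprK addrACA [b + d]addrC. Qed.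
End AbelId.

Section Witt.
Variables (R : realType) (p : nat).
Local Notation m := (4 * p)%N.
Local Notation clA := (clA R m).
Local Notation e a := (cl_e R m a : clA).
Local Notation f k := (witt R m k : clA).
Local Notation fd k := (wittd R m k : clA).

Lemma fE k : f k = Defs.half R *: (- e (2 * k)%N + imag_unit R *: e (2 * k).+1).
Proof. by []. Qed.
Lemma fdE k : fd k = Defs.half R *: (e (2 * k)%N + imag_unit R *: e (2 * k).+1).
Proof. by []. Qed.

Lemma eq2 k l : (2 * k == 2 * l)%N = (k == l).
Proof. by rewrite eqn_pmul2l. Qed.
Lemma eq2S k l : (2 * k == (2 * l).+1)%N = false.
Proof. by apply/negbTE/eqP; lia. Qed.
Lemma eqS2 k l : ((2 * k).+1 == 2 * l)%N = false.
Proof. by apply/negbTE/eqP; lia. Qed.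
Lemma eqSS2 k l : ((2 * k).+1 == (2 * l).+1)%N = (k == l).
Proof. by rewrite eqSS eq2. Qed.

Lemma anti_ff k l : (k < 2 * p)%N -> (l < 2 * p)%N -> anti (f k) (f l) = 0.
Proof.
move=> hk hl.
rewrite !fE !(antiZl, antiZr, antiDl, antiDr, antiNl, antiNr).
rewrite !anti_ge; try lia.
rewrite eq2 eq2S eqS2 eqSS2.
rewrite ?opprD ?opprK -?scaleNr ?scalerA -?scalerDl ?scalerA -?scalerDl ?scalerA.
apply: scA0; case: eqP => _; rewrite ?oppr0 ?mulr0 ?addr0 ?add0r ?mulrA ?ii.
all: ring.
Qed.

Lemma anti_fdfd k l : (k < 2 * p)%N -> (l < 2 * p)%N -> anti (fd k) (fd l) = 0.
Proof.
move=> hk hl.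
rewrite !fdE !(antiZl, antiZr, antiDl, antiDr, antiNl, antiNr).
rewrite !anti_ge; try lia.
rewrite eq2 eq2S eqS2 eqSS2.
rewrite ?opprD ?opprK -?scaleNr ?scalerA -?scalerDl ?scalerA -?scalerDl ?scalerA.
apply: scA0; case: eqP => _; rewrite ?oppr0 ?mulr0 ?addr0 ?add0r ?mulrA ?ii.
all: ring.
Qed.

Lemma anti_ffd k l : (k < 2 * p)%N -> (l < 2 * p)%N ->
  anti (f k) (fd l) = (if k == l then 1 else 0)%:A.
Proof.
move=> hk hl.
rewrite fE fdE !(antiZl, antiZr, antiDl, antiDr, antiNl, antiNr).
rewrite !anti_ge; try lia.
rewrite eq2 eq2S eqS2 eqSS2.
rewrite ?opprD ?opprK -?scaleNr ?scalerA -?scalerDl ?scalerA -?scalerDl ?scalerA.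
congr (_ *: _); case: eqP => _; rewrite ?oppr0 ?mulr0 ?addr0 ?add0r ?mulrA ?ii.
  rewrite [imag_unit R * Defs.half R * imag_unit R]mulrAC ii.
  transitivity ((Defs.half R * 2) * (Defs.half R * 2)); first ring.
  by rewrite hh mulr1.
ring.
Qed.

Lemma antiE' (u a : clA) c : anti a u = c -> u * a = - (a * u) + c.
Proof. by rewrite /anti => <-; rewrite addKr. Qed.

Lemma antiE0 (u a : clA) : anti a u = 0 -> u * a = - (a * u).
Proof. by move/antiE'; rewrite addr0. Qed.

Lemma triple (u a b : clA) (da db : complex R) :
  u * a = - (a * u) + da%:A -> u * b = - (b * u) + db%:A ->
  u * (a * b) = a * b * u - db *: a + da *: b.
Proof.
move=> ha hb; rewrite mulrA ha mulrDl mulNr mulr_algl -[a * u * b]mulrA hb.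
rewrite mulrDr mulrN mulr_algr opprD opprK mulrA; by [].
Qed.

Lemma delta_sum (n : nat) (g : nat -> clA) i : (i < n)%N ->
  \sum_(j < n) (if (j : nat) == i then g j else 0) = g i.
Proof.
move=> hi; rewrite (bigD1 (Ordinal hi)) //= eqxx big1 ?addr0 // => j hj.
have -> : ((j : nat) == i) = false.
  by apply/negbTE; apply: contra hj => /eqP h; apply/eqP/val_inj.
by [].
Qed.

Lemma scale_if (b : bool) (x : clA) : (if b then 1 else 0) *: x = if b then x else 0.
Proof. by case: b; rewrite ?scale1r ?scale0r. Qed.

Lemma sum_split (V : zmodType) (n0 : nat) (g : nat -> V) :
  \sum_(k < 2 * n0) g k = \sum_(j < n0) (g (2 * j)%N + g (2 * j).+1).
Proof.
elim: n0 => [|n IH]; first by rewrite muln0 !big_ord0.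
rewrite [in RHS]big_ord_recr -IH.
have -> : (2 * n.+1 = (2 * n).+2)%N by lia.
rewrite !big_ord_recr; exact: (esym (addrA _ _ _)).
Qed.

Definition cP : clA := clP R p.
Definition cQ : clA := clQ R p.
Lemma cPE : cP = \sum_(j < p) f (2 * j).+1 * f (2 * j)%N.
Proof. by rewrite /cP /clP clsumE. Qed.
Lemma cQE : cQ = \sum_(j < p) fd (2 * j)%N * fd (2 * j).+1.
Proof. by rewrite /cQ /clQ clsumE. Qed.

Lemma fP k : (k < 2 * p)%N -> f k * cP = cP * f k.
Proof.
move=> hk; rewrite cPE mulr_sumr mulr_suml; apply: eq_bigr => j _.
have hj := ltn_ord j.
rewrite (@triple _ _ _ 0 0) ?scale0r ?subr0 ?addr0 //.
  by apply: antiE0; rewrite anti_ff //; lia.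
by apply: antiE0; rewrite anti_ff //; lia.
Qed.

Lemma fdQ k : (k < 2 * p)%N -> fd k * cQ = cQ * fd k.
Proof.
move=> hk; rewrite cQE mulr_sumr mulr_suml; apply: eq_bigr => j _.
have hj := ltn_ord j.
rewrite (@triple _ _ _ 0 0) ?scale0r ?subr0 ?addr0 //.
  by apply: antiE0; rewrite anti_fdfd //; lia.
by apply: antiE0; rewrite anti_fdfd //; lia.
Qed.

Lemma fdP_gen k : (k < 2 * p)%N -> fd k * cP = cP * fd k +
  \sum_(j < p) (- (if k == (2 * j)%N then f (2 * j).+1 else 0)
                + (if k == (2 * j).+1 then f (2 * j)%N else 0)).
Proof.
move=> hk; rewrite cPE mulr_sumr mulr_suml -big_split; apply: eq_bigr => j _.
have hj := ltn_ord j.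
rewrite (@triple _ _ _ (if (2 * j).+1 == k then 1 else 0) (if (2 * j)%N == k then 1 else 0)).
- by rewrite !scale_if ![_ == k]eq_sym; exact: (esym (addrA _ _ _)).
- by apply: antiE'; rewrite anti_ffd //; lia.
- by apply: antiE'; rewrite anti_ffd //; lia.
Qed.

Lemma fQ_gen k : (k < 2 * p)%N -> f k * cQ = cQ * f k +
  \sum_(j < p) (- (if k == (2 * j).+1 then fd (2 * j)%N else 0)
                + (if k == (2 * j)%N then fd (2 * j).+1 else 0)).
Proof.
move=> hk; rewrite cQE mulr_sumr mulr_suml -big_split; apply: eq_bigr => j _.
have hj := ltn_ord j.
rewrite (@triple _ _ _ (if k == (2 * j)%N then 1 else 0) (if k == (2 * j).+1 then 1 else 0)).
- by rewrite !scale_if; exact: (esym (addrA _ _ _)).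
- rewrite -anti_ffd; last by lia. all: try lia.
  by rewrite /anti addrC; apply/eqP; rewrite -subr_eq opprK; apply/eqP.
- rewrite -anti_ffd; last by lia. all: try lia.
  by rewrite /anti addrC; apply/eqP; rewrite -subr_eq opprK; apply/eqP.
Qed.

Lemma fdP_even i : (i < p)%N -> fd (2 * i)%N * cP = cP * fd (2 * i)%N - f (2 * i).+1.
Proof.
move=> hi; rewrite fdP_gen; last by lia.
congr (_ + _).
under eq_bigr => j _ do rewrite eq2 eq2S addr0 [i == _]eq_sym.
by rewrite sumrN; congr (- _); exact: (delta_sum (fun j => f (2 * j).+1) hi).
Qed.

Lemma fdP_odd i : (i < p)%N -> fd (2 * i).+1 * cP = cP * fd (2 * i).+1 + f (2 * i)%N.
Proof.
move=> hi; rewrite fdP_gen; last by lia.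
congr (_ + _).
under eq_bigr => j _ do rewrite eqSS2 eqS2 oppr0 add0r [i == _]eq_sym.
by exact: (delta_sum (fun j => f (2 * j)%N) hi).
Qed.

Lemma fQ_even i : (i < p)%N -> f (2 * i)%N * cQ = cQ * f (2 * i)%N + fd (2 * i).+1.
Proof.
move=> hi; rewrite fQ_gen; last by lia.
congr (_ + _).
under eq_bigr => j _ do rewrite eq2S eq2 oppr0 add0r [i == _]eq_sym.
by exact: (delta_sum (fun j => fd (2 * j).+1) hi).
Qed.

Lemma fQ_odd i : (i < p)%N -> f (2 * i).+1 * cQ = cQ * f (2 * i).+1 - fd (2 * i)%N.
Proof.
move=> hi; rewrite fQ_gen; last by lia.
congr (_ + _).
under eq_bigr => j _ do rewrite eqSS2 eqS2 addr0 [i == _]eq_sym.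
by rewrite sumrN; congr (- _); exact: (delta_sum (fun j => fd (2 * j)%N) hi).
Qed.


Section Keys.
Variable X : nat -> clA.

Lemma keyPDz : \sum_(k < 2 * p) fd k * (cP * X k) =
  cP * \sum_(k < 2 * p) fd k * X k + \sum_(j < p) (f (2 * j)%N * X (2 * j).+1 - f (2 * j).+1 * X (2 * j)%N).
Proof.
rewrite (sum_split p (fun k => fd k * (cP * X k))) (sum_split p (fun k => fd k * X k)).
rewrite mulr_sumr -big_split; apply: eq_bigr => j _; have hj := ltn_ord j.
rewrite !mulrA (fdP_even hj) (fdP_odd hj) mulrBl mulrDl mulrDr !mulrA.
exact: E1.
Qed.

Lemma keyPDzdag : \sum_(k < 2 * p) f k * (cP * X k) = cP * \sum_(k < 2 * p) f k * X k.
Proof.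
rewrite mulr_sumr; apply: eq_bigr => k _.
by rewrite !mulrA fP.
Qed.

Lemma keyPDzJ : \sum_(j < p) (f (2 * j)%N * (cP * X (2 * j).+1) - f (2 * j).+1 * (cP * X (2 * j)%N)) =
  cP * \sum_(j < p) (f (2 * j)%N * X (2 * j).+1 - f (2 * j).+1 * X (2 * j)%N).
Proof.
rewrite mulr_sumr; apply: eq_bigr => j _; have hj := ltn_ord j.
by rewrite !mulrA !fP ?mulrBr ?mulrA //; lia.
Qed.

Lemma keyPDzdagJ : \sum_(j < p) (fd (2 * j)%N * (cP * X (2 * j).+1) - fd (2 * j).+1 * (cP * X (2 * j)%N)) =
  cP * \sum_(j < p) (fd (2 * j)%N * X (2 * j).+1 - fd (2 * j).+1 * X (2 * j)%N)
  - \sum_(k < 2 * p) f k * X k.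
Proof.
rewrite (sum_split p (fun k => f k * X k)) mulr_sumr -sumrB; apply: eq_bigr => j _.
have hj := ltn_ord j.
rewrite !mulrA (fdP_even hj) (fdP_odd hj) mulrBl mulrDl mulrBr !mulrA.
exact: E2.
Qed.

Lemma keyQDz : \sum_(k < 2 * p) fd k * (cQ * X k) = cQ * \sum_(k < 2 * p) fd k * X k.
Proof.
rewrite mulr_sumr; apply: eq_bigr => k _.
by rewrite !mulrA fdQ.
Qed.

Lemma keyQDzdag : \sum_(k < 2 * p) f k * (cQ * X k) =
  cQ * \sum_(k < 2 * p) f k * X k
  - \sum_(j < p) (fd (2 * j)%N * X (2 * j).+1 - fd (2 * j).+1 * X (2 * j)%N).
Proof.
rewrite (sum_split p (fun k => f k * (cQ * X k))) (sum_split p (fun k => f k * X k)).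
rewrite mulr_sumr -sumrB; apply: eq_bigr => j _; have hj := ltn_ord j.
rewrite !mulrA (fQ_even hj) (fQ_odd hj) mulrBl mulrDl mulrDr !mulrA.
exact: E3.
Qed.

Lemma keyQDzJ : \sum_(j < p) (f (2 * j)%N * (cQ * X (2 * j).+1) - f (2 * j).+1 * (cQ * X (2 * j)%N)) =
  cQ * \sum_(j < p) (f (2 * j)%N * X (2 * j).+1 - f (2 * j).+1 * X (2 * j)%N)
  + \sum_(k < 2 * p) fd k * X k.
Proof.
rewrite (sum_split p (fun k => fd k * X k)) mulr_sumr -big_split; apply: eq_bigr => j _.
have hj := ltn_ord j.
rewrite !mulrA (fQ_even hj) (fQ_odd hj) mulrBl mulrDl mulrBr !mulrA.
exact: E4.
Qed.

Lemma keyQDzdagJ : \sum_(j < p) (fd (2 * j)%N * (cQ * X (2 * j).+1) - fd (2 * j).+1 * (cQ * X (2 * j)%N)) =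
  cQ * \sum_(j < p) (fd (2 * j)%N * X (2 * j).+1 - fd (2 * j).+1 * X (2 * j)%N).
Proof.
rewrite mulr_sumr; apply: eq_bigr => j _; have hj := ltn_ord j.
by rewrite !mulrA !fdQ ?mulrBr ?mulrA //; lia.
Qed.
End Keys.

End Witt.

Section Deriv.
Variable (R : realType).
Lemma ReM (a b : complex R) : complex.Re (a * b) = complex.Re a * complex.Re b - complex.Im a * complex.Im b.
Proof. by case: a => a1 a2; case: b => b1 b2. Qed.
Lemma ImM (a b : complex R) : complex.Im (a * b) = complex.Re a * complex.Im b + complex.Im a * complex.Re b.
Proof. by case: a => a1 a2; case: b => b1 b2 /=; ring. Qed.
Lemma ReD (a b : complex R) : complex.Re (a + b) = complex.Re a + complex.Re b.
Proof. by case: a => a1 a2; case: b => b1 b2. Qed.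
Lemma ImD (a b : complex R) : complex.Im (a + b) = complex.Im a + complex.Im b.
Proof. by case: a => a1 a2; case: b => b1 b2. Qed.
Lemma Re_sum (I : finType) (g : I -> complex R) : complex.Re (\sum_i g i) = \sum_i complex.Re (g i).
Proof. by apply: (big_morph _ ReD). Qed.
Lemma Im_sum (I : finType) (g : I -> complex R) : complex.Im (\sum_i g i) = \sum_i complex.Im (g i).
Proof. by apply: (big_morph _ ImD). Qed.

Variable m : nat.
Lemma is_derive_seq (I : Type) (r : seq I) (h : I -> 'rV[R]_m -> R) x v (dh : I -> R) :
  (forall i, is_derive x v (h i) (dh i)) ->
  is_derive x v (fun y => \sum_(i <- r) h i y) (\sum_(i <- r) dh i).
Proof.
move=> H; elim: r => [|a r IH].
  have -> : (fun y : 'rV[R]_m => \sum_(i <- [::]) h i y) = cst 0.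
    by apply: funext => y; rewrite big_nil.
  by rewrite big_nil; exact: is_derive_cst.
have -> : (fun y => \sum_(i <- a :: r) h i y) = (h a + (fun y => \sum_(i <- r) h i y)).
  by apply: funext => y; rewrite big_cons.
by rewrite big_cons; apply: is_deriveD.
Qed.
Lemma is_derive_scal (g : 'rV[R]_m -> R) (k : R) x v dg : is_derive x v g dg ->
  is_derive x v (fun y => k * g y) (k * dg).
Proof. move=> h; exact: (is_deriveZ k h). Qed.
Lemma is_derive_lin2 (g h : 'rV[R]_m -> R) (k l : R) x v dg dh :
  is_derive x v g dg -> is_derive x v h dh ->
  is_derive x v (fun y => k * g y - l * h y) (k * dg - l * dh).
Proof.
move=> hg hh.
have -> : (fun y => k * g y - l * h y) = (k \*: g - l \*: h) by apply: funext.
exact: is_deriveB (is_deriveZ k hg) (is_deriveZ l hh).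
Qed.
Lemma is_derive_lin2' (g h : 'rV[R]_m -> R) (k l : R) x v dg dh :
  is_derive x v g dg -> is_derive x v h dh ->
  is_derive x v (fun y => k * g y + l * h y) (k * dg + l * dh).
Proof.
move=> hg hh.
have -> : (fun y => k * g y + l * h y) = (k \*: g + l \*: h) by apply: funext.
exact: is_deriveD (is_deriveZ k hg) (is_deriveZ l hh).
Qed.
Lemma diff_seq (I : Type) (r : seq I) (h : I -> 'rV[R]_m -> R) x :
  (forall i, differentiable (h i) x) ->
  differentiable (fun y => \sum_(i <- r) h i y) x.
Proof.
move=> H; elim: r => [|a r IH].
  have -> : (fun y : 'rV[R]_m => \sum_(i <- [::]) h i y) = cst 0.
    by apply: funext => y; rewrite big_nil.
  exact: differentiable_cst.
have -> : (fun y => \sum_(i <- a :: r) h i y) = (h a + (fun y => \sum_(i <- r) h i y)).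
  by apply: funext => y; rewrite big_cons.
by apply: differentiableD.
Qed.
Lemma diff_scal (g : 'rV[R]_m -> R) (k : R) x : differentiable g x ->
  differentiable (fun y => k * g y) x.
Proof. move=> h; exact: (differentiableZ k h). Qed.

Local Notation Re := complex.Re.
Local Notation Im := complex.Im.

Definition cdiff (F : 'rV[R]_m -> Cl R m) x := forall A : {set 'I_m},
    differentiable (fun y => Re (F y A)) x /\ differentiable (fun y => Im (F y A)) x.

Lemma ReG (c : clA R m) (F : 'rV[R]_m -> Cl R m) C :
  (fun y => Re (cl_mul c (F y) C)) =
  (fun y => \sum_(A : {set 'I_m}) (Re (cl_sign R A (sd A C) * c A) * Re (F y (sd A C))
                      - Im (cl_sign R A (sd A C) * c A) * Im (F y (sd A C)))).
Proof.
by apply: funext => y; rewrite mulE Re_sum; apply: eq_bigr => A _; exact: ReM.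
Qed.
Lemma ImG (c : clA R m) (F : 'rV[R]_m -> Cl R m) C :
  (fun y => Im (cl_mul c (F y) C)) =
  (fun y => \sum_(A : {set 'I_m}) (Re (cl_sign R A (sd A C) * c A) * Im (F y (sd A C))
                      + Im (cl_sign R A (sd A C) * c A) * Re (F y (sd A C)))).
Proof.
by apply: funext => y; rewrite mulE Im_sum; apply: eq_bigr => A _; exact: ImM.
Qed.

Lemma cdiff_mul (c : clA R m) F x : cdiff F x -> cdiff (fun y => cl_mul c (F y)) x.
Proof.
move=> hF C; rewrite ReG ImG; split; apply: diff_seq => A.
  by apply: differentiableB; apply: diff_scal; case: (hF (sd A C)).
by apply: differentiableD; apply: diff_scal; case: (hF (sd A C)).
Qed.

Lemma pderiv_mul (c : clA R m) F a x : cdiff F x ->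
  pderiv (fun y => cl_mul c (F y)) a x = c * pderiv F a x.
Proof.
move=> hF; apply/ffunP=> C.
rewrite /pderiv ffunE -clmulE mulE ReG ImG.
set v := coord_dir R m a.
have dR B : is_derive x v (fun y => Re (F y B)) ('D_v (fun y => Re (F y B)) x).
  by apply: derivableP; apply: diff_derivable; case: (hF B).
have dI B : is_derive x v (fun y => Im (F y B)) ('D_v (fun y => Im (F y B)) x).
  by apply: derivableP; apply: diff_derivable; case: (hF B).
set k := fun A => cl_sign R A (sd A C) * c A.
have H1 := is_derive_seq (index_enum _) (fun A => is_derive_lin2 (Re (k A)) (Im (k A)) (dR (sd A C)) (dI (sd A C))).
have H2 := is_derive_seq (index_enum _) (fun A => is_derive_lin2' (Re (k A)) (Im (k A)) (dI (sd A C)) (dR (sd A C))).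
rewrite (@derive_val _ _ _ _ _ _ _ H1) (@derive_val _ _ _ _ _ _ _ H2).
apply/eqP; rewrite eq_complex Re_sum Im_sum; apply/andP; split; apply/eqP.
  by apply: eq_bigr => A _; rewrite ffunE [in RHS]ReM.
by apply: eq_bigr => A _; rewrite ffunE [in RHS]ImM.
Qed.
End Deriv.



Section Main2.
Variables (R : realType) (p : nat).
Local Notation m := (4 * p)%N.
Local Notation clA := (clA R m).
Local Notation f k := (witt R m k : clA).
Local Notation fd k := (wittd R m k : clA).

Lemma dz_mul (c : clA) (F : 'rV[R]_m -> Cl R m) k x : cdiff F x ->
  dz k (fun y => cl_mul c (F y)) x = c * dz k F x.
Proof.
move=> hF; rewrite /dz !pderiv_mul //.
rewrite !clscaleE !claddE !cloppE.
by rewrite [in LHS]scalerAr -mulrBr scalerAr.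
Qed.
Lemma dzb_mul (c : clA) (F : 'rV[R]_m -> Cl R m) k x : cdiff F x ->
  dzb k (fun y => cl_mul c (F y)) x = c * dzb k F x.
Proof.
move=> hF; rewrite /dzb !pderiv_mul //.
rewrite !clscaleE !claddE.
by rewrite [in LHS]scalerAr -mulrDr scalerAr.
Qed.

Lemma DzE (F : 'rV[R]_m -> Cl R m) x : Dz F x = \sum_(k < 2 * p) fd k * dz k F x.
Proof. exact: clsumE. Qed.
Lemma DzdagE (F : 'rV[R]_m -> Cl R m) x : Dzdag F x = \sum_(k < 2 * p) f k * dzb k F x.
Proof. exact: clsumE. Qed.
Lemma DzJE (F : 'rV[R]_m -> Cl R m) x : DzJ F x =
  \sum_(j < p) (f (2 * j)%N * dz (2 * j).+1 F x - f (2 * j).+1 * dz (2 * j)%N F x).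
Proof. exact: clsumE. Qed.
Lemma DzdagJE (F : 'rV[R]_m -> Cl R m) x : DzdagJ F x =
  \sum_(j < p) (fd (2 * j)%N * dzb (2 * j).+1 F x - fd (2 * j).+1 * dzb (2 * j)%N F x).
Proof. exact: clsumE. Qed.

Lemma mainP (Omega : set 'rV[R]_m) (F : 'rV[R]_m -> Cl R m) :
  cl_differentiable Omega F -> q_monogenic Omega F ->
  q_monogenic Omega (fun x => cl_mul (clP R p) (F x)).
Proof.
move=> hd [hsp _ hops]; split.
- move=> x hx; case: (hsp x hx) => a ->; exists (cl_mul (clP R p) a); exact: clmulA.
- by move=> x hx; apply: cdiff_mul; exact: (hd x hx).
move=> x hx; have hF : cdiff F x := hd x hx.
case: (hops x hx) => h1 h2 h3 h4.
have EX k : dz k (fun y => cl_mul (clP R p) (F y)) x = (cP R p : clA) * dz k F x.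
  exact (@dz_mul (clP R p) F k x hF).
have EY k : dzb k (fun y => cl_mul (clP R p) (F y)) x = (cP R p : clA) * dzb k F x.
  exact (@dzb_mul (clP R p) F k x hF).
split.
- apply: etrans (DzE _ _) _.
  have S1 : \sum_(k < 2 * p) fd k * dz k (fun y => cl_mul (clP R p) (F y)) x =
            \sum_(k < 2 * p) fd k * ((cP R p : clA) * dz k F x).
    by apply: eq_bigr => k _; exact: (congr1 (fun z => fd k * z) (EX k)).
  apply: etrans S1 _.
  apply: etrans (@keyPDz R p (fun k => dz k F x)) _.
  rewrite -(DzE F x) -(DzJE F x) h1 h3.
  by rewrite clzeroE mulr0 addr0.
- apply: etrans (DzdagE _ _) _.
  have S1 : \sum_(k < 2 * p) f k * dzb k (fun y => cl_mul (clP R p) (F y)) x =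
            \sum_(k < 2 * p) f k * ((cP R p : clA) * dzb k F x).
    by apply: eq_bigr => k _; exact: (congr1 (fun z => f k * z) (EY k)).
  apply: etrans S1 _.
  apply: etrans (@keyPDzdag R p (fun k => dzb k F x)) _.
  rewrite -(DzdagE F x) h2.
  by rewrite clzeroE mulr0.
- apply: etrans (DzJE _ _) _.
  have S1 : \sum_(j < p) (f (2 * j)%N * dz (2 * j).+1 (fun y => cl_mul (clP R p) (F y)) x
                - f (2 * j).+1 * dz (2 * j)%N (fun y => cl_mul (clP R p) (F y)) x) =
            \sum_(j < p) (f (2 * j)%N * ((cP R p : clA) * dz (2 * j).+1 F x)
                - f (2 * j).+1 * ((cP R p : clA) * dz (2 * j)%N F x)).
    by apply: eq_bigr => j _; exact: (congr2 (fun a b => f (2 * j)%N * a - f (2 * j).+1 * b) (EX _) (EX _)).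
  apply: etrans S1 _.
  apply: etrans (@keyPDzJ R p (fun k => dz k F x)) _.
  rewrite -(DzJE F x) h3.
  by rewrite clzeroE mulr0.
- apply: etrans (DzdagJE _ _) _.
  have S1 : \sum_(j < p) (fd (2 * j)%N * dzb (2 * j).+1 (fun y => cl_mul (clP R p) (F y)) x
                - fd (2 * j).+1 * dzb (2 * j)%N (fun y => cl_mul (clP R p) (F y)) x) =
            \sum_(j < p) (fd (2 * j)%N * ((cP R p : clA) * dzb (2 * j).+1 F x)
                - fd (2 * j).+1 * ((cP R p : clA) * dzb (2 * j)%N F x)).
    by apply: eq_bigr => j _; exact: (congr2 (fun a b => fd (2 * j)%N * a - fd (2 * j).+1 * b) (EY _) (EY _)).
  apply: etrans S1 _.
  apply: etrans (@keyPDzdagJ R p (fun k => dzb k F x)) _.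
  rewrite -(DzdagJE F x) -(DzdagE F x) h4 h2.
  by rewrite clzeroE mulr0 subr0.
Qed.

Lemma mainQ (Omega : set 'rV[R]_m) (F : 'rV[R]_m -> Cl R m) :
  cl_differentiable Omega F -> q_monogenic Omega F ->
  q_monogenic Omega (fun x => cl_mul (clQ R p) (F x)).
Proof.
move=> hd [hsp _ hops]; split.
- move=> x hx; case: (hsp x hx) => a ->; exists (cl_mul (clQ R p) a); exact: clmulA.
- by move=> x hx; apply: cdiff_mul; exact: (hd x hx).
move=> x hx; have hF : cdiff F x := hd x hx.
case: (hops x hx) => h1 h2 h3 h4.
have EX k : dz k (fun y => cl_mul (clQ R p) (F y)) x = (cQ R p : clA) * dz k F x.
  exact (@dz_mul (clQ R p) F k x hF).
have EY k : dzb k (fun y => cl_mul (clQ R p) (F y)) x = (cQ R p : clA) * dzb k F x.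
  exact (@dzb_mul (clQ R p) F k x hF).
split.
- apply: etrans (DzE _ _) _.
  have S1 : \sum_(k < 2 * p) fd k * dz k (fun y => cl_mul (clQ R p) (F y)) x =
            \sum_(k < 2 * p) fd k * ((cQ R p : clA) * dz k F x).
    by apply: eq_bigr => k _; exact: (congr1 (fun z => fd k * z) (EX k)).
  apply: etrans S1 _.
  apply: etrans (@keyQDz R p (fun k => dz k F x)) _.
  rewrite -(DzE F x) h1.
  by rewrite clzeroE mulr0.
- apply: etrans (DzdagE _ _) _.
  have S1 : \sum_(k < 2 * p) f k * dzb k (fun y => cl_mul (clQ R p) (F y)) x =
            \sum_(k < 2 * p) f k * ((cQ R p : clA) * dzb k F x).
    by apply: eq_bigr => k _; exact: (congr1 (fun z => f k * z) (EY k)).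
  apply: etrans S1 _.
  apply: etrans (@keyQDzdag R p (fun k => dzb k F x)) _.
  rewrite -(DzdagE F x) -(DzdagJE F x) h2 h4.
  by rewrite clzeroE mulr0 subr0.
- apply: etrans (DzJE _ _) _.
  have S1 : \sum_(j < p) (f (2 * j)%N * dz (2 * j).+1 (fun y => cl_mul (clQ R p) (F y)) x
                - f (2 * j).+1 * dz (2 * j)%N (fun y => cl_mul (clQ R p) (F y)) x) =
            \sum_(j < p) (f (2 * j)%N * ((cQ R p : clA) * dz (2 * j).+1 F x)
                - f (2 * j).+1 * ((cQ R p : clA) * dz (2 * j)%N F x)).
    by apply: eq_bigr => j _; exact: (congr2 (fun a b => f (2 * j)%N * a - f (2 * j).+1 * b) (EX _) (EX _)).
  apply: etrans S1 _.
  apply: etrans (@keyQDzJ R p (fun k => dz k F x)) _.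
  rewrite -(DzJE F x) -(DzE F x) h3 h1.
  by rewrite clzeroE mulr0 addr0.
- apply: etrans (DzdagJE _ _) _.
  have S1 : \sum_(j < p) (fd (2 * j)%N * dzb (2 * j).+1 (fun y => cl_mul (clQ R p) (F y)) x
                - fd (2 * j).+1 * dzb (2 * j)%N (fun y => cl_mul (clQ R p) (F y)) x) =
            \sum_(j < p) (fd (2 * j)%N * ((cQ R p : clA) * dzb (2 * j).+1 F x)
                - fd (2 * j).+1 * ((cQ R p : clA) * dzb (2 * j)%N F x)).
    by apply: eq_bigr => j _; exact: (congr2 (fun a b => fd (2 * j)%N * a - fd (2 * j).+1 * b) (EY _) (EY _)).
  apply: etrans S1 _.
  apply: etrans (@keyQDzdagJ R p (fun k => dzb k F x)) _.
  rewrite -(DzdagJE F x) h4.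
  by rewrite clzeroE mulr0.
Qed.

End Main2.

Unset Implicit Arguments.
Set Strict Implicit.
Local Open Scope classical_set_scope.

Theorem lemma2 (R : realType) (p : nat) (Omega : set 'rV[R]_(4 * p))
    (F : 'rV[R]_(4 * p) -> Cl R (4 * p)) :
  open Omega ->
  cl_differentiable Omega F ->
  q_monogenic Omega F ->
  q_monogenic Omega (fun x => cl_mul (clP R p) (F x)) /\
  q_monogenic Omega (fun x => cl_mul (clQ R p) (F x)).
Proof.
move=> _ hd hq; split; [exact: mainP | exact: mainQ].
Qed.
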